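(* Let $d\ge1$, let $R_1,\dots,R_k$ be a fixed sequence of subsets of $V$, each of size $1$ or $2$, and let $i\in V$. Suppose $|R_1|=2$ and $i\in R_1$. Run Algorithm 1 on $R_1,\dots,R_k$. Let $\mu^i$ be the expected number of rounds in which $i$ is matched. Let $\mu^i_{\mathrm{receiver}}$ be the same expectation conditioned on round $1$ being a receiver round, and $\mu^i_{\mathrm{sender}}$ the same expectation conditioned on round $1$ being a sender round. Then $$\mu^i_{\mathrm{receiver}}\le\mu^i\le\mu^i_{\mathrm{sender}}.$$
   Context: Online correlated rental setting: there is a finite set $V$ of offline vertices and an integer $d\ge1$. Proposals (subsets of $V$ of size $1$ or $2$) are revealed one per round; at each round the algorithm selects one vertex of the proposal. An offline vertex $i$ is matched at round $j$ if it is selected at round $j$ and was not matched at any round $t$ with $j-d<t<j$. Algorithm 1: it keeps a state $\tau_{i,t}\in\{\mathrm{sel},\mathrm{nsel},\mathrm{unk}\}$ for every $i$ and round $t$, initially all $\mathrm{unk}$. All random draws are fresh and independent. ''Reset $i$'' at round $j$ means setting $\tau_{i,t}=\mathrm{unk}$ for all $t\in[j+1,j+d-1]$. (1) If the proposal at round $j$ is $\{i_1\}$: reset $i_1$ and select $i_1$. (2) If the proposal is $\{i_1,i_2\}$: with probability $1/2$ the round is a sender, and otherwise it is a receiver. - Sender: draw $\ell,m\in\{1,2\}$ independently and uniformly. Reset $i_{3-m}$. Set $\tau_{i_m,t}=\mathrm{sel}$ for $t\in[j+1,j+d-1]$ if $\ell=m$, and $\mathrm{nsel}$ otherwise. Select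 $i_\ell$. - Receiver: draw $m\in\{1,2\}$ uniformly. If $\tau_{i_m,j}=\mathrm{sel}$, let $\ell=3-m$; if $\tau_{i_m,j}=\mathrm{nsel}$, let $\ell=m$; otherwise draw $\ell$ uniformly from $\{1,2\}$. Reset $i_1,i_2$. Select $i_\ell$. *)

(* Defs.v *)
From mathcomp Require Import all_boot all_order all_algebra.
Unset Strict Implicit. Unset Printing Implicit Defensive.
Import Order.TTheory GRing.Theory Num.Theory.

Inductive tstate := Sel | NSel | Unk.

(* random draws of one round: ((s, a), b).
   s = true : sender round (prob 1/2).
   Sender:   l = (if a then 1 else 2),  m = (if b then 1 else 2).
   Receiver: m = (if a then 1 else 2),  fallback l = (if b then 1 else 2).
   Unused draws are irrelevant (all draws fresh, independent, uniform). *)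
Definition draw := (bool * bool * bool)%type.

Section Alg.
Variables (V : finType) (d : nat).

Definition tauT := V -> nat -> tstate.

Definition setrange (tf : tauT) (x : V) (j : nat) (v : tstate) : tauT :=
  fun y t => if (y == x) && (j < t < j + d) then v else tf y t.

Definition reset (tf : tauT) (x : V) (j : nat) : tauT := setrange tf x j Unk.

(* one round j (0-based) with proposal R and draws w:
   returns the new state and the selected vertex (None only for
   ill-formed proposals). Proposal {i1,i2} is labelled by enum R. *)
Definition step (j : nat) (R : {set V}) (w : draw) (tf : tauT)
  : tauT * option V :=
  match enum R with
  | [:: i1] => (reset tf i1 j, Some i1)
  | [:: i1; i2] =>
      let pick (one : bool) := if one then i1 else i2 in
      let: (s, a, b) := w in
      if s then (* sender: l <-> a, m <-> b *)
        let tf1 := reset tf (pick (~~ b)) j in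
        (setrange tf1 (pick b) j (if a == b then Sel else NSel), Some (pick a))
      else (* receiver: m <-> a *)
        let l := match tf (pick a) j with
                 | Sel => ~~ a | NSel => a | Unk => b end in
        (reset (reset tf i1 j) i2 j, Some (pick l))
  | _ => (tf, None)
  end.

(* Vertex i is matched
   at round j iff it is selected at j and not matched at any t, j-d<t<j. *)
Fixpoint nmatched (i : V) (j : nat) (Rs : seq {set V}) (om : nat -> draw)
    (tf : tauT) (lasti : option nat) : nat :=
  match Rs with
  | [::] => 0
  | R :: Rs' =>
      let: (tf', sel) := step j R (om j) tf in
      let m := (sel == Some i) &&
               (if lasti is Some t then d <= j - t else true) in
      m + nmatched i j.+1 Rs' om tf' (if m then Some j else lasti)
  end.

Definition tau0 : tauT := fun _ _ => Unk.

(* outcome space: independent uniform draws for each of the k rounds *)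
Definition omega (k : nat) := {ffun 'I_k -> draw}.

Definition draws (k : nat) (w : omega k) : nat -> draw :=
  fun j => if insub j is Some o then w o else (false, false, false).

Definition count_matched (i : V) (Rs : seq {set V}) (w : omega (size Rs)) : nat :=
  nmatched i 0 Rs (draws (size Rs) w) tau0 None.

Definition cond_exp (i : V) (Rs : seq {set V}) (P : pred (omega (size Rs))) : rat :=
  ((\sum_(w : omega (size Rs) | P w) (count_matched i Rs w)%:R)
     / #|[pred w | P w]|%:R)%R.

Definition mu (i : V) Rs := cond_exp i Rs predT.
Definition sender_round1 (k : nat) (w : omega k) : bool := (draws k w 0).1.1.
Definition mu_sender (i : V) Rs := cond_exp i Rs (sender_round1 (size Rs)).
Definition mu_receiver (i : V) Rs :=
  cond_exp i Rs (fun w => ~~ sender_round1 (size Rs) w).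
End Alg.

(* Main.v *)
Require Import Defs.
From mathcomp Require Import all_boot all_order all_algebra.
From mathcomp Require Import zify.
Import Order.TTheory GRing.Theory Num.Theory.

Section P.
Variables (V : finType) (d : nat) (i : V).
Hypothesis d_gt0 : 0 < d.

Definition mt (j : nat) (L : option nat) : bool := if L is Some t then d <= j - t else true.
Definition eb (j : nat) (L : option nat) : nat := if L is Some t then maxn j (t + d) else j.

Notation nm := (nmatched V d i).

Lemma step_ext j R w (tf1 tf2 : tauT V) :
  (forall y t, j <= t -> tf1 y t = tf2 y t) ->
  (step V d j R w tf1).2 = (step V d j R w tf2).2 /\
  forall y t, j < t -> (step V d j R w tf1).1 y t = (step V d j R w tf2).1 y t.
Proof.
move=> H; rewrite /step.
case: (enum R) => [|x1 [|x2 [|x3 s']]] /=.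
- split=> // y t Ht; apply: H; lia.
- split=> // y t Ht; rewrite /reset /setrange; case: ifP => // _; apply: H; lia.
- case: w => [[s a] b]; case: s => /=.
  + split=> // y t Ht; rewrite /reset /setrange; do 2 (case: ifP => // _); apply: H; lia.
  + rewrite H //; split=> // y t Ht; rewrite /reset /setrange; do 2 (case: ifP => // _); apply: H; lia.
- split=> // y t Ht; apply: H; lia.
Qed.

Lemma nm_ext Rs : forall j om1 om2 tf1 tf2 L,
  (forall t, j <= t -> om1 t = om2 t) ->
  (forall y t, j <= t -> tf1 y t = tf2 y t) ->
  nm j Rs om1 tf1 L = nm j Rs om2 tf2 L.
Proof.
elim: Rs => [|R Rs IH] j om1 om2 tf1 tf2 L Hom Htf //=.
rewrite Hom //.
have [E1 E2] := step_ext j R (om2 j) tf1 tf2 Htf.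
case: (step V d j R (om2 j) tf1) E1 E2 => [tf1' s1];
case: (step V d j R (om2 j) tf2) => [tf2' s2] /= -> E2.
congr (_ + _); apply: IH => [t Ht|y t Ht]; [apply: Hom|apply: E2]; lia.
Qed.

Lemma cmp Rs : forall j om tf L1 L2,
  eb j L1 <= eb j L2 <= eb j L1 + d ->
  nm j Rs om tf L2 <= nm j Rs om tf L1 <= nm j Rs om tf L2 + 1.
Proof.
elim: Rs => [|R Rs IH] j om tf L1 L2 HL //=.
case: (step V d j R (om j) tf) => [tf' s] /=.
case: (s == Some i) => /=; last first.
  apply: IH; case: L1 L2 HL => [t1|] [t2|] /=; lia.
case: L1 L2 HL => [t1|] [t2|] /= HL.
all: repeat case: ifP => /= ? .
all: first [ have := IH j.+1 om tf' (Some j) (Some j) ltac:(simpl; lia); lia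
           | have := IH j.+1 om tf' (Some j) (Some t2) ltac:(simpl; lia); lia
           | have := IH j.+1 om tf' (Some t1) (Some j) ltac:(simpl; lia); lia
           | have := IH j.+1 om tf' (Some t2) (Some j) ltac:(simpl; lia); lia
           | have := IH j.+1 om tf' None (Some j) ltac:(simpl; lia); lia
           | have := IH j.+1 om tf' (Some t1) (Some t2) ltac:(simpl; lia); lia
           | have := IH j.+1 om tf' None (Some t2) ltac:(simpl; lia); lia
           | have := IH j.+1 om tf' None None ltac:(simpl; lia); lia
           | have := IH j.+1 om tf' (Some t1) None ltac:(simpl; lia); lia
           | lia ].
Qed.

Lemma sel_cmp j Rs om tf L (s1 s2 : bool) : (s2 -> ~~ s1 -> ~~ mt j L) ->
  s2 && mt j L + nm j.+1 Rs om tf (if s2 && mt j L then Some j else L) <=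
  s1 && mt j L + nm j.+1 Rs om tf (if s1 && mt j L then Some j else L).
Proof.
case: s1 s2 => [] [] //= H; case Hm: (mt j L) => //=.
  have := cmp Rs j.+1 om tf L (Some j).
  move: Hm; clear H; case: L => [t|] /= Hm; move=> /(_ ltac:(lia)); lia.
by move: (H erefl erefl); rewrite Hm.
Qed.

Definition Pres (f : tauT V -> tauT V) := forall tf1 tf2 y t,
  f tf1 y t <> f tf2 y t -> f tf1 y t = tf1 y t /\ f tf2 y t = tf2 y t.

Lemma Pres_sr x j0 c : Pres (fun tf => setrange V d tf x j0 c).
Proof. by move=> tf1 tf2 y t; rewrite /setrange; case: ifP. Qed.

Lemma Pres_comp f g : Pres f -> Pres g -> Pres (fun tf => g (f tf)).
Proof.
move=> Hf Hg tf1 tf2 y t H; have [-> ->] := Hg _ _ _ _ H.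
have H' : f tf1 y t <> f tf2 y t by have [E1 E2] := Hg _ _ _ _ H; rewrite -E1 -E2.
exact: Hf.
Qed.

Variables (v : V) (val : tstate).

Definition good t L := (val = Sel /\ v <> i) \/ (val = NSel /\ v = i) \/ ~~ mt t L.
Definition Inv j (tf1 tf2 : tauT V) L := forall y t, j <= t -> tf1 y t <> tf2 y t ->
  [/\ y = v, t < d, tf2 y t = Unk, tf1 y t = val & good t L].

Lemma inv_pres f j tf1 tf2 L : Pres f -> Inv j tf1 tf2 L -> Inv j (f tf1) (f tf2) L.
Proof.
move=> Hf HI y t Ht H; have [E1 E2] := Hf _ _ _ _ H; rewrite E1 E2 in H *.
exact: HI.
Qed.

Lemma inv_next j tf1 tf2 L (s : bool) : Inv j tf1 tf2 L ->
  Inv j.+1 tf1 tf2 (if s && mt j L then Some j else L).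
Proof.
move=> HI y t Ht H; have [-> Htd -> -> Hg] := HI y t (ltnW Ht) H; split=> //; clear HI H.
case: s => //=; case Hm: (mt j L) => //.
case: Hg => [|[|]] Hg; [by left|by right; left|].
right; right; move: Hg Hm; rewrite /mt; case: L => [t0|] //=; lia.
Qed.

Arguments inv_next {j tf1 tf2 L} s.
Lemma tdec (x y : tstate) : x = y \/ x <> y.
Proof. by case: x; case: y; (by left) || (by right). Qed.
Lemma inv_sr j tf1 tf2 L x j0 c : Inv j tf1 tf2 L ->
  Inv j (setrange V d tf1 x j0 c) (setrange V d tf2 x j0 c) L.
Proof. exact: (inv_pres (fun tf => setrange V d tf x j0 c) j tf1 tf2 L (Pres_sr x j0 c)). Qed.
Arguments inv_pres f {j tf1 tf2 L}.
Notation pk x1 x2 b := (if b then x1 else x2).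

Lemma key Rs : forall j om tf1 tf2 L, Inv j tf1 tf2 L -> nm j Rs om tf2 L <= nm j Rs om tf1 L.
Proof.
elim: Rs => [|R Rs IH] j om tf1 tf2 L HI //=.
have Hu : uniq (enum R) by apply: enum_uniq.
rewrite /step; move: Hu.
case: (enum R) => [|x1 [|x2 [|x3 s']]] Hu /=.
- rewrite leq_add2l; apply: IH; exact: (inv_next false HI).
- rewrite leq_add2l; apply: IH; apply: inv_next.
  exact: (inv_pres _ (Pres_sr x1 j Unk) HI).
- case: (om j) => [[s a] b]; case: s => /=.
  + rewrite leq_add2l; apply: IH; apply: inv_next.
    rewrite /reset; do 2 apply: inv_sr; exact: HI.
  + case: (tdec (tf1 (pk x1 x2 a) j) (tf2 (pk x1 x2 a) j)) => E.
      rewrite E leq_add2l; apply: IH; apply: inv_next.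
      rewrite /reset; do 2 apply: inv_sr; exact: HI.
    have [Ev Hjd E2 E1 Hg] := HI _ _ (leqnn j) E.
    rewrite E2 E1.
    rewrite (nm_ext Rs j.+1 om om _ (reset V d (reset V d tf2 x1 j) x2 j)) //; last first.
      move=> y t Ht; rewrite /reset /setrange.
      case: ifP => // /negbT H2; case: ifP => // /negbT H1.
      case: (tdec (tf1 y t) (tf2 y t)) => // Ed.
      have [Ey Htd _ _ _] := HI y t (ltnW Ht) Ed.
      move: H1 H2; rewrite Ey -Ev; case: a {E E1 E2 Ev} => /=; rewrite eqxx /=; lia.
    apply: sel_cmp.
    move: Hu; rewrite /= inE andbT => Hx.
    move: Hg; rewrite /good => Hg.
    case: Hg => [[Hval Hvi]|[[Hval Hvi]|Hm]]; last by move=> *; exact: Hm.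
      rewrite Hval; case: a b Ev {E E1 E2} => [] [] /= Ev; move=> /eqP [H1];
      rewrite ?H1 ?eqxx //; by move: Hvi; rewrite -Ev -H1.
    rewrite Hval => _; rewrite Ev Hvi eqxx.
    done.
- rewrite leq_add2l; apply: IH; exact: (inv_next false HI).
Qed.
End P.


Section Top.
Variable k : nat.
Definition swp (x : draw) : draw := let: (s, a, b) := x in (~~ s, b, a).
Definition flip (w : omega k.+1) : omega k.+1 :=
  [ffun o => if o == ord0 then swp (w o) else w o].

Lemma flipK : involutive flip.
Proof.
move=> w; apply/ffunP => o; rewrite !ffunE; case: (o == ord0) => //.
by case: (w o) => [[s a] b] /=; rewrite negbK.
Qed.

Lemma draws0 (w : omega k.+1) : draws k.+1 w 0 = w ord0.
Proof.
rewrite /draws; case: insubP => [o _ Ho|] //.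
by congr (w _); apply: val_inj.
Qed.

Lemma drawsS (w : omega k.+1) j : 0 < j -> draws k.+1 (flip w) j = draws k.+1 w j.
Proof.
move=> Hj; rewrite /draws; case: insubP => [o _ Ho|] //.
rewrite ffunE; case: eqP => // Eo; move: Ho; rewrite Eo /=; lia.
Qed.

Lemma sender_flip w : sender_round1 k.+1 (flip w) = ~~ sender_round1 k.+1 w.
Proof.
rewrite /sender_round1 !draws0 ffunE eqxx.
by case: (w ord0) => [[s a] b].
Qed.

Lemma sum_flip (g : omega k.+1 -> rat) :
  (\sum_(w | ~~ sender_round1 k.+1 w) g w = \sum_(w | sender_round1 k.+1 w) g (flip w))%R.
Proof.
rewrite (reindex_inj (can_inj flipK)); apply: eq_bigl => w.
by rewrite sender_flip negbK.
Qed.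
End Top.

Lemma pw (V : finType) (d : nat) (R1 : {set V}) (Rs : seq {set V}) (i x1 x2 : V) :
  0 < d -> enum R1 = [:: x1; x2] -> x1 != x2 -> (i == x1) || (i == x2) ->
  forall w : omega (size Rs).+1, sender_round1 _ w ->
  count_matched V d i (R1 :: Rs) (flip _ w) <= count_matched V d i (R1 :: Rs) w.
Proof.
move=> d_gt0 Henum Hx Hi w Hs.
rewrite /count_matched /= /step Henum !draws0 ffunE eqxx.
move: Hs; rewrite /sender_round1 draws0.
case: (w ord0) => [[s a] b] /= Hs; rewrite Hs /=.
rewrite leq_add2l.
rewrite (nm_ext V d i d_gt0 Rs 1 (draws (size Rs).+1 (flip _ w)) (draws (size Rs).+1 w) (reset V d (reset V d (tau0 V) x1 0) x2 0) (tau0 V)); first last.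
- move=> y t Ht; rewrite /reset /setrange /tau0; by repeat case: ifP.
- by move=> t Ht; apply: drawsS.
apply: (key _ _ _ d_gt0 (if b then x1 else x2) (if a == b then Sel else NSel)).
move=> y t Ht; rewrite /reset /setrange /tau0 /=.
case: ifP => [/andP [/eqP Ey Hr] _|]; last by move=> _; case: ifP.
split=> //; first lia.
rewrite /good /mt.
case: a b {Hs} Ey => [] [] Ey /=; move: Hi Hx; rewrite ?eqxx /=.
all: move=> Hi' Hx'; rewrite !(inj_eq (@Some_inj _)) /=.
all: case: (eqVneq x1 i) Hi' Hx' => [E1|N1]; case: (eqVneq x2 i) => [E2|N2];
  rewrite ?E1 ?E2 ?eqxx //= => Hi' Hx'.
all: try by (right; right; lia).
all: try by (left; split=> //; apply/eqP).
all: try by (right; left; split).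
all: try by move: Hi'; rewrite eq_sym (negbTE N1) eq_sym (negbTE N2).
all: try by (right; right; rewrite (negbTE N1) /=; lia).
Qed.

From mathcomp Require Import ring lra.
Theorem claim3 (V : finType) (d : nat) (R1 : {set V}) (Rs : seq {set V}) (i : V) :
  0 < d ->
  all (fun R : {set V} => (#|R| == 1) || (#|R| == 2)) (R1 :: Rs) ->
  #|R1| = 2 -> i \in R1 ->
  (mu_receiver V d i (R1 :: Rs) <= mu V d i (R1 :: Rs) <= mu_sender V d i (R1 :: Rs))%R.
Proof.
move=> d_gt0 _ Hc Hi.
have [x1 [x2 [Henum Hx]]] : exists x1 x2, enum R1 = [:: x1; x2] /\ x1 != x2.
  have Hu := enum_uniq (pred_of_set R1).
  move: Hc Hu; rewrite cardE; case: (enum R1) => [|y1 [|y2 [|? ?]]] //= _.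
  by rewrite inE andbT => H; exists y1, y2.
have Hi' : (i == x1) || (i == x2) by move: Hi; rewrite -mem_enum Henum !inE.
rewrite /mu_receiver /mu /mu_sender /cond_exp /=.
set S := sender_round1 (size Rs).+1.
set f := fun w : omega (size Rs).+1 => ((count_matched V d i (R1 :: Rs) w)%:R : rat).
have cardP (P : pred (omega (size Rs).+1)) : #|[pred w | P w]| = (\sum_(w | P w) 1)%N.
  by rewrite -sum1_card; apply: eq_bigl.
have Ec : #|[pred w | ~~ S w]| = #|[pred w | S w]|.
  rewrite !cardP (reindex_inj (can_inj (flipK _))); apply: eq_bigl => w.
  by rewrite /S sender_flip negbK.
have Et : #|[pred w : omega (size Rs).+1 | predT w]| = (#|[pred w | S w]| + #|[pred w | ~~ S w]|)%N.
  by rewrite !cardP (bigID S).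
have Hpos : (0 < #|[pred w | S w]|)%N.
  apply/card_gt0P; exists [ffun _ => (true, true, true)].
  by rewrite inE /S /sender_round1 draws0 ffunE.
have Esum : (\sum_(w : omega (size Rs).+1 | predT w) f w = \sum_(w | S w) f w + \sum_(w | ~~ S w) f w)%R.
  by rewrite (bigID S).
have Hle : (\sum_(w | ~~ S w) f w <= \sum_(w | S w) f w)%R.
  rewrite /S sum_flip; apply: ler_sum => w Hw; rewrite ler_nat.
  exact: (pw _ _ _ _ _ _ _ d_gt0 Henum Hx Hi' w Hw).
rewrite /f in Esum Hle.
rewrite Et Ec natrD.
have -> : (\sum_w (count_matched V d i (R1 :: Rs) w)%:R =
   \sum_(w | S w) (count_matched V d i (R1 :: Rs) w)%:R +
   \sum_(w | ~~ S w) (count_matched V d i (R1 :: Rs) w)%:R :> rat)%R by exact: Esum.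
move: Hle Hpos.
set x := #|[pred w | S w]|.
set p := (\sum_(w | S w) (count_matched V d i (R1 :: Rs) w)%:R)%R.
set q := (\sum_(w | ~~ S w) (count_matched V d i (R1 :: Rs) w)%:R)%R.
move=> Hle Hpos.
have Hx0 : (0 < (x%:R : rat))%R by rewrite ltr0n.
have Hab : (q / x%:R <= p / x%:R)%R by rewrite ler_pM2r // invr_gt0.
have -> : ((p + q) / (x%:R + x%:R) = (q / x%:R + p / x%:R) / 2 :> rat)%R.
  by field; rewrite !gt_eqF // addr_gt0.
move: Hab; set A := (q / x%:R)%R; set B := (p / x%:R)%R => Hab.
apply/andP; split; lra.
Qed.
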